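(* Let $(\mathcal{L},\mathcal{D}(\mathcal{L}))$ be the generator of a $C_0$-contraction semigroup on a Banach space $\mathcal{X}$ and $M\in\mathcal{B}(\mathcal{X})$ a contraction such that there is $\tilde c>0$ with $\|M^n-\sum_{j=1}^J\lambda_j^nP_j\|_\infty\le\tilde c\,\delta^n$ for all $n\in\mathbb{N}$, for projections $\{P_j\}_{j=1}^J$ with $P_jP_k=1_{j=k}P_j$, $|\lambda_j|=1$, and $\delta\in(0,1)$. Let $P_\Sigma=\sum_{j=1}^JP_j$, assume $M\mathcal{L}$ and $\mathcal{L}P_\Sigma$ are densely defined and bounded by $b\ge0$, $\|P_j\|_\infty=1$ for all $j\in\{1,\dots,J,\Sigma\}$, and put $c_p=\|\mathbf{1}-P_\Sigma\|_\infty$. Let $\tilde\delta\in(\delta,1)$. Then there are $\epsilon_1>0$ and $c_2\ge0$ such that for all $t\ge0$ and $n\in\mathbb{N}$ with $t\in[0,n\epsilon_1]$, $$\Big\|\big(Me^{\frac tn\mathcal{L}}\big)^n-\big(P_\Sigma Me^{\frac tn\mathcal{L}}P_\Sigma\big)^n\Big\|_\infty\le c_2\tilde\delta^n+\frac{tb}{n}+\frac1n\,\frac{tbc_pc_2(2+tbc_pc_2)(\tilde\delta-\tilde\delta^n)}{1-\tilde\delta}e^{2tbc_pc_2}.$$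
   Context: $\mathcal{B}(\mathcal{X})$: bounded operators with operator norm $\|\cdot\|_\infty$; $\mathbf{1}$ the identity; contraction: norm at most $1$; projection: bounded idempotent. A $C_0$-contraction semigroup is a strongly continuous semigroup of contractions, denoted $e^{t\mathcal{L}}$ by its generator. A densely defined operator bounded by $b$ is identified with its bounded extension to $\mathcal{X}$ of norm at most $b$. $1_{j=k}$ is $1$ if $j=k$ and $0$ otherwise. *)

(* Defs.v *)
From HB Require Import structures.
From mathcomp Require Import all_boot all_order all_algebra.
From mathcomp Require Import all_classical all_reals all_analysis.
From mathcomp.real_closed Require Import complex.
Set Implicit Arguments. Unset Strict Implicit. Unset Printing Implicit Defensive.
Import Order.TTheory GRing.Theory Num.Theory.
Import numFieldNormedType.Exports.
Local Open Scope classical_set_scope.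
Local Open Scope ring_scope.
Local Open Scope complex_scope.

Section Ops.
Variables (R : realType) (X : completeNormedModType R[i]).

Definition bounded_by (A : X -> X) (c : R) : Prop :=
  forall x : X, `|A x| <= c%:C * `|x|.

Definition bounded_op (A : X -> X) : Prop := exists c : R, bounded_by A c.

(* operator norm ||A||_oo = sup { ||A x|| : ||x|| <= 1 } (norms of X are
   real elements of R[i]; we take their real part) *)
Definition opnorm (A : X -> X) : R :=
  sup [set complex.Re `|A x| | x in [set x : X | `|x| <= 1]].

(* T : R -> (X -> X) is a C_0-contraction semigroup (used for t >= 0) *)
Definition C0_contraction_semigroup (T : R -> {linear X -> X}) : Prop :=
  [/\ (forall x, T 0 x = x),
      (forall s t x, 0 <= s -> 0 <= t -> T (s + t) x = T s (T t x)),
      (forall t, 0 <= t -> bounded_by (T t) 1) &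
      (forall x, T t x @[t --> 0^'+] --> x)].

Definition is_generator (T : R -> {linear X -> X}) (D : set X) (L : X -> X)
  : Prop :=
  (D = [set x | cvg ((h^-1)%:C *: (T h x - x) @[h --> 0^'+])]) /\
  (forall x, D x -> (h^-1)%:C *: (T h x - x) @[h --> 0^'+] --> L x).

End Ops.

(* Main.v *)
Require Import Defs.
From HB Require Import structures.
From mathcomp Require Import all_boot all_order all_algebra.
From mathcomp Require Import all_classical all_reals all_analysis.
From mathcomp.real_closed Require Import complex.
From mathcomp Require Import ring lra.
Import Order.TTheory GRing.Theory Num.Theory.
Import numFieldNormedType.Exports.
Local Open Scope classical_set_scope.
Local Open Scope ring_scope.
Local Open Scope complex_scope.

Set Implicit Arguments. Unset Strict Implicit.
Section Basics.
Context (R : realType) (X : completeNormedModType R[i]).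
Definition nrm (x : X) : R := complex.Re `|x|.
Lemma nrmE x : `|x| = (nrm x)%:C.
Proof.
rewrite /nrm; have := ger0_Im (normr_ge0 x).
by case: (`|x|) => a b /= ->.
Qed.
Lemma nrm_ge0 x : 0 <= nrm x.
Proof. by rewrite -ler0c -nrmE normr_ge0. Qed.
Lemma nrmD x y : nrm (x + y) <= nrm x + nrm y.
Proof. rewrite -lecR. rewrite raddfD. rewrite /= -!nrmE. exact: ler_normD. Qed.
Lemma nrmN x : nrm (- x) = nrm x.
Proof. by rewrite /nrm normrN. Qed.
Lemma nrmB x y : nrm (x - y) <= nrm x + nrm y.
Proof. by rewrite -(nrmN y) nrmD. Qed.
Lemma nrm0 : nrm 0 = 0.
Proof. by rewrite /nrm normr0. Qed.
Lemma nrm_eq0 x : (nrm x == 0) = (x == 0).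
Proof. by rewrite -[x == 0]normr_eq0 nrmE -(rmorph0 (real_complex R)) (inj_eq (@complexI R)). Qed.
Lemma nrmZ (a : R[i]) x : nrm (a *: x) = complex.Re `|a| * nrm x.
Proof. by rewrite /nrm normrZ nrmE; case: `|a| => p q; rewrite /= mulr0 subr0. Qed.
Lemma nrmZr (a : R) x : nrm (a%:C *: x) = `|a| * nrm x.
Proof. rewrite nrmZ; congr (_ * _). rewrite normc_def /= expr0n /= addr0 sqrtr_sqr //. Qed.
Lemma nrm_sum (I : Type) (r : seq I) (F : I -> X) : nrm (\sum_(i <- r) F i) <= \sum_(i <- r) nrm (F i).
Proof.
elim: r => [|a r IH]; first by rewrite !big_nil nrm0.
rewrite !big_cons; apply: le_trans (nrmD _ _) _; by rewrite lerD2l.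
Qed.
Lemma bounded_byE (A : X -> X) c : bounded_by A c <-> forall x, nrm (A x) <= c * nrm x.
Proof.
split=> H x; have := H x; by rewrite !nrmE -rmorphM lecR.
Qed.
Lemma nrm_le1 x : (`|x| <= 1) = (nrm x <= 1).
Proof. by rewrite nrmE -lecR rmorph1. Qed.

Lemma opnorm_le (A : X -> X) c : (forall x, nrm (A x) <= c * nrm x) -> 0 <= c -> opnorm A <= c.
Proof.
move=> H c0; apply: ge_sup.
  exists (complex.Re `|A 0|); exists 0 => //=; by rewrite normr0 ler01.
move=> _ [x /= x1 <-]; apply: le_trans (H x) _.
by apply: ler_piMr => //; rewrite -nrm_le1.
Qed.

Definition scal (A : X -> X) := forall (a : R[i]) x, A (a *: x) = a *: A x.

Lemma opnorm_ge (A : X -> X) : bounded_op A -> scal A ->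
  forall x, nrm (A x) <= opnorm A * nrm x.
Proof.
case=> c /bounded_byE Hc HZ x.
have hub : has_ubound [set complex.Re `|A x| | x in [set x : X | `|x| <= 1]].
  exists `|c| => _ [z /= z1 <-]; rewrite -/(nrm (A z)).
  apply: le_trans (Hc z) _; apply: le_trans (ler_wpM2r (nrm_ge0 _) (real_ler_norm _)) _.
    by rewrite num_real.
  by apply: ler_piMr => //; rewrite -nrm_le1.
have [->|x0] := eqVneq x 0.
  have -> : A 0 = 0 by have := HZ 0 0; rewrite !scale0r.
  by rewrite !nrm0 mulr0.
have r0 : 0 < nrm x by rewrite lt_def nrm_eq0 x0 nrm_ge0.
set u := ((nrm x)^-1)%:C *: x.
have u1 : nrm u = 1 by rewrite /u nrmZr ger0_norm ?invr_ge0 ?nrm_ge0 // mulVf // gt_eqF.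
have : complex.Re `|A u| <= opnorm A.
  by apply: ub_le_sup hub _ _; exists u => //=; rewrite nrm_le1 u1.
rewrite -/(nrm (A u)) /u HZ nrmZr ger0_norm ?invr_ge0 ?nrm_ge0 //.
by rewrite ler_pdivrMl // mulrC.
Qed.
Lemma opnorm_hub (A : X -> X) : bounded_op A ->
  has_ubound [set complex.Re `|A x| | x in [set x : X | `|x| <= 1]].
Proof.
case=> c /bounded_byE Hc.
exists `|c| => _ [z /= z1 <-]; rewrite -/(nrm (A z)).
apply: le_trans (Hc z) _; apply: le_trans (ler_wpM2r (nrm_ge0 _) (real_ler_norm _)) _.
  by rewrite num_real.
by apply: ler_piMr => //; rewrite -nrm_le1.
Qed.

Lemma opnorm_ge0 (A : X -> X) : bounded_op A -> 0 <= opnorm A.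
Proof.
move=> hA; apply: le_trans (nrm_ge0 (A 0)) _.
rewrite /nrm /opnorm; apply: ub_le_sup (opnorm_hub hA) _ _; exists 0 => //=; by rewrite normr0 ler01.
Qed.

Lemma iter_contr (f : X -> X) k x : (forall y, nrm (f y) <= nrm y) -> nrm (iter k f x) <= nrm x.
Proof. move=> hf; elim: k => //= k IH; exact: le_trans (hf _) IH. Qed.
End Basics.

Lemma near_right_ex (R : realType) (P : R -> Prop) : (\forall h \near 0^'+, P h) ->
  exists2 e : R, 0 < e & forall h, 0 < h -> h < e -> P h.
Proof.
case => e /= e0 He. exists e => // h h0 he; apply: He => //=.
by rewrite /ball /= sub0r normrN gtr0_norm.
Qed.

Lemma ltC0 (R : realType) (k : R) : 0 < k -> (0 : R[i]) < k%:C.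
Proof. by move=> k0; rewrite ltcE /= eqxx k0. Qed.

Section Semi.
Context (R : realType) (X : completeNormedModType R[i]) (T : R -> {linear X -> X})
  (D : set X) (L : X -> X).
Context (hT : C0_contraction_semigroup T) (hG : is_generator T D L).

Lemma T0 x : T 0 x = x. Proof. by case: hT. Qed.
Lemma TD s t x : 0 <= s -> 0 <= t -> T (s + t) x = T s (T t x).
Proof. by case: hT => _ H _ _; apply: H. Qed.
Lemma Tc t x : 0 <= t -> nrm (T t x) <= nrm x.
Proof. by case: hT => _ _ H _ t0; have /bounded_byE := H t t0; move/(_ x); rewrite mul1r. Qed.

Lemma key z (Dz : D z) s (s0 : 0 <= s) (G : {linear X -> X}) C :
  (forall y, nrm (G y) <= nrm y) -> (forall r, 0 <= r -> nrm (G (T r (L z))) <= C) ->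
  nrm (G (T s z - z)) <= s * C.
Proof.
move=> HG HC.
have [s_le0|s_gt0] := leP s 0.
  have -> : s = 0 by apply/le_anti; rewrite s_le0 s0.
  by rewrite T0 subrr linear0 nrm0 mul0r.
apply/ler_addgt0Pr => e e0.
have := (proj2 hG) z Dz; move/cvgrPdist_lt/(_ ((e/s)%:C) (ltC0 (divr_gt0 e0 s_gt0))).
case/near_right_ex => eta eta0 Heta.
set m := Num.bound (s / eta).
have hm : s / eta < m%:R by apply: archi_boundP; rewrite divr_ge0 // ltW.
have m0 : (0 < m)%N by [].
have m0R : (0 : R) < m%:R by rewrite ltr0n.
set h := s / m%:R.
have h0 : 0 < h by rewrite divr_gt0.
have heta : h < eta by rewrite /h ltr_pdivrMr // mulrC -ltr_pdivrMr.
have Hh := Heta h h0 heta.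
have tele : T s z - z = \sum_(i < m) T (i%:R * h) (T h z - z).
  rewrite -(big_mkord xpredT (fun i => T (i%:R * h) (T h z - z))).
  have -> : T s z - z = (fun k : nat => T (k%:R * h) z) m - (fun k : nat => T (k%:R * h) z) 0%N.
    by rewrite /= mul0r T0 /h mulrC divfK // gt_eqF.
  rewrite -(telescope_sumr (fun k : nat => T (k%:R * h) z)) //; apply: eq_bigr => i _ /=.
  rewrite linearB /= -TD; last 2 first.
  - by rewrite mulr_ge0 // ltW.
  - exact: ltW.
  by rewrite -addn1 natrD mulrDl mul1r.
set w := T h z - z - h%:C *: L z.
have hw : nrm w <= h * (e / s).
  have -> : w = - (h%:C *: (L z - (h^-1)%:C *: (T h z - z))).
    by rewrite scalerBr scalerA -rmorphM mulfV ?gt_eqF // rmorph1 scale1r opprB.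
  rewrite nrmN nrmZr gtr0_norm // ler_pM2l // ltW //.
  by move: Hh; rewrite nrmE ltcR.
have eqw : T h z - z = h%:C *: L z + w by rewrite /w addrCA subrr addr0.
clearbody w.
rewrite tele linear_sum /=.
apply: le_trans; first exact: nrm_sum.
apply: (@le_trans _ _ (\sum_(i < m) (h * C + h * (e / s)))).
  apply: ler_sum => i _.
  rewrite eqw !linearD /= !linearZ /=.
  apply: le_trans (nrmD _ _) _; apply: lerD.
    rewrite nrmZr gtr0_norm // ler_pM2l //; apply: HC; rewrite mulr_ge0 // ltW //.
  apply: le_trans (HG _) _; apply: le_trans (Tc _ _) hw.
  by rewrite mulr_ge0 // ltW.
rewrite sumr_const card_ord -mulr_natl /h.
by rewrite mulrDr !mulrA [m%:R * s]mulrC !mulfK ?gt_eqF // [s * e]mulrC mulfK ?gt_eqF.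
Qed.

Lemma Tle t v : 0 <= t -> `|T t v| <= `|v|.
Proof. by move=> t0; rewrite !nrmE lecR Tc. Qed.

Lemma TinD z r : D z -> 0 <= r -> D (T r z) /\ L (T r z) = T r (L z).
Proof.
move=> Dz r0.
have Hc : (fun h : R => (h^-1)%:C *: (T h (T r z) - T r z)) @ 0^'+ --> T r (L z).
  apply/cvgrPdist_lt => eps eps0.
  have := (proj2 hG) z Dz; move/cvgrPdist_lt/(_ eps eps0) => Hn.
  apply: filterS2 Hn (nbhs_right_gt 0) => h Hh h0.
  have E : T h (T r z) = T r (T h z) by rewrite -!TD ?(ltW h0) // addrC.
  rewrite E -linearB -linearZ -linearB.
  exact: le_lt_trans (Tle _ r0) Hh.
have DT : D (T r z) by rewrite (proj1 hG) /=; apply: cvgP Hc.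
split=> //; have := (proj2 hG) _ DT => H2.
exact: (cvg_unique _ H2 Hc).
Qed.
End Semi.

Section Dense.
Context (R : realType) (X : completeNormedModType R[i]).
Lemma dense_ext (G : X -> X) (HGB : forall x y, G (x - y) = G x - G y) (K : R) (K0 : 0 <= K)
  (HK : forall v, nrm (G v) <= K * nrm v) (c : R) (c0 : 0 <= c) (S : set X)
  (dense : closure S = setT) (HS : forall z, S z -> nrm (G z) <= c * nrm z) :
  forall x, nrm (G x) <= c * nrm x.
Proof.
move=> x; apply/ler_addgt0Pr => e e0.
have cK : 0 < c + K + 1 by rewrite ltr_wpDl // addr_ge0.
set d := e / (c + K + 1).
have d0 : 0 < d by rewrite divr_gt0.
have : closure S x by rewrite dense.
move/(_ (ball x d%:C) (nbhsx_ballx _ _ (ltC0 d0))) => [z [Sz]].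
rewrite -ball_normE /= nrmE ltcR => xz.
have G0 : G 0 = 0 by have := HGB 0 0; rewrite subrr => ->; rewrite subrr.
have GN y : G (- y) = - G y by rewrite -sub0r HGB G0 sub0r.
have -> : G x = G z + G (x - z).
  by rewrite -{1}(subrK z x) addrC -{1}(opprK (x - z)) HGB GN opprK.
apply: le_trans (nrmD _ _) _.
apply: le_trans (lerD (HS _ Sz) (HK (x - z))) _.
have zx : nrm z <= nrm x + nrm (x - z).
  by rewrite -(nrmN (x - z)) opprB; apply: le_trans (nrmD _ _); rewrite addrC subrK.
have : c * nrm z <= c * nrm x + c * nrm (x - z) by rewrite -mulrDr ler_wpM2l.
have : (c + K) * nrm (x - z) <= e.
  apply: (@le_trans _ _ ((c + K + 1) * d)); last by rewrite /d mulrC divfK ?gt_eqF.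
  apply: ler_pM => //; [by rewrite addr_ge0 | exact: nrm_ge0 | by rewrite lerDl | exact: ltW].
rewrite mulrDl; lra.
Qed.
End Dense.

Section Core.
Context (R : realType) (X : completeNormedModType R[i]).
Context (M Ts : {linear X -> X}) (Ps : X -> X) (s b K dl : R).
Context (hPsB : forall x y, Ps (x - y) = Ps x - Ps y).
Context (HMc : forall y, nrm (M y) <= nrm y) (HTc : forall y, nrm (Ts y) <= nrm y)
  (HPc : forall y, nrm (Ps y) <= nrm y) (HPP : forall y, Ps (Ps y) = Ps y)
  (HPM : forall y, Ps (M y) = M (Ps y))
  (Ha : forall y, nrm (M (Ts y - y)) <= s * b * nrm y)
  (HK : forall m z, nrm (iter m M (z - Ps z)) <= K * dl ^+ m * nrm z).
Context (s0 : 0 <= s) (b0 : 0 <= b) (K0 : 0 <= K) (dl0 : 0 < dl) (dl1 : dl < 1).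

Let Ps0 : Ps 0 = 0.
Proof. by have := hPsB 0 0; rewrite subrr => ->; rewrite subrr. Qed.
Let PsN y : Ps (- y) = - Ps y.
Proof. by rewrite -sub0r hPsB Ps0 sub0r. Qed.
Let PsD x y : Ps (x + y) = Ps x + Ps y.
Proof. by rewrite -{1}(opprK y) hPsB PsN opprK. Qed.

Let iterM_lin m : {morph iter m M : x y / x + y}.
Proof. by elim: m => [|m IH] x y //=; rewrite IH linearD. Qed.

Definition Gs (k : nat) := (1 - dl ^+ k) / (1 - dl).
Lemma Gs_le k : Gs k <= (1 - dl)^-1.
Proof.
rewrite /Gs ler_pdivrMr ?subr_gt0 // mulVf ?gt_eqF ?subr_gt0 //.
by rewrite lerBlDr lerDl exprn_ge0 // ltW.
Qed.
Lemma Gs_ge0 k : 0 <= Gs k.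
Proof.
apply: divr_ge0; rewrite subr_ge0; last exact: ltW.
by rewrite exprn_ile1 // ltW.
Qed.

Section Traj.
Variable x : X.
Let A := fun y => M (Ts y).
Let B := fun y => Ps (M (Ts (Ps y))).
Let xk k := iter k A x.
Let qk k := xk k - Ps (xk k).
Let yk k := Ps (iter k B x).

Lemma xk_le k : nrm (xk k) <= nrm x.
Proof.
elim: k => [|k IH] //=; apply: le_trans IH; apply: le_trans (HMc _) _; exact: HTc.
Qed.

Lemma qk_rec k : qk k.+1 = M (qk k) + (M (Ts (xk k) - xk k) - Ps (M (Ts (xk k) - xk k))).
Proof.
rewrite /qk /= -/(xk k) /A.
have -> : M (Ts (xk k)) = M (xk k) + M (Ts (xk k) - xk k) by rewrite -linearD addrC subrK.
by rewrite PsD HPM linearB [M (xk k - _)]linearB opprD addrACA.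
Qed.

Lemma qk_bound k : forall m, nrm (iter m M (qk k)) <=
  K * dl ^+ (m + k) * nrm x + K * s * b * nrm x * dl ^+ m * Gs k.
Proof.
elim: k => [|k IH] m.
  by rewrite /Gs expr0 subrr mul0r mulr0 addr0 addn0; apply: HK.
rewrite qk_rec iterM_lin -iterSr.
apply: le_trans (nrmD _ _) _.
have h2 := HK m (M (Ts (xk k) - xk k)).
apply: le_trans (lerD (IH m.+1) h2) _.
have h3 : K * dl ^+ m * nrm (M (Ts (xk k) - xk k)) <= K * dl ^+ m * (s * b * nrm x).
  apply: ler_wpM2l; first by rewrite mulr_ge0 // exprn_ge0 // ltW.
  apply: le_trans (Ha _) _; apply: ler_wpM2l; [by rewrite mulr_ge0 | exact: xk_le].
apply: le_trans (lerD (lexx _) h3) _.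
rewrite addSnnS.
have -> : Gs k.+1 = 1 + dl * Gs k.
  rewrite /Gs exprS; field; by rewrite subr_eq0 eq_sym lt_eqF.
rewrite exprSr le_eqVlt; apply/orP; left; apply/eqP; ring.
Qed.
Lemma pk_bound k : nrm (Ps (xk k) - yk k) <=
  s * b * (K * nrm x * Gs k + k%:R * (K * s * b * nrm x) / (1 - dl)).
Proof.
elim: k => [|k IH].
  by rewrite /yk /xk /= subrr nrm0 /Gs expr0 subrr !mul0r mulr0 add0r mulr0.
have Hq := qk_bound k 0; rewrite /= add0n expr0 mulr1 in Hq.
have E1 : yk k.+1 = Ps (M (Ts (yk k))) by rewrite /yk iterS /B HPP.
have E2 : Ps (xk k.+1) = Ps (M (Ts (Ps (xk k)))) + Ps (M (Ts (qk k) - qk k)).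
  rewrite /xk iterS -/(xk k) /A /qk.
  move: (xk k) => y.
  have Hq0 : Ps (M (y - Ps y)) = 0 by rewrite HPM hPsB HPP subrr linear0.
  have -> : Ts y = Ts (Ps y) + Ts (y - Ps y) by rewrite -linearD addrC subrK.
  rewrite [M (_ + _)]linearD PsD; congr (_ + _).
  by rewrite [M (Ts _ - _)]linearB hPsB Hq0 subr0.
rewrite E2 E1 addrAC -hPsB -linearB -linearB.
apply: le_trans (nrmD _ _) _.
have H1 : nrm (Ps (M (Ts (Ps (xk k) - yk k)))) <= nrm (Ps (xk k) - yk k).
  by apply: le_trans (HPc _) _; apply: le_trans (HMc _) _; apply: HTc.
have H2 : nrm (Ps (M (Ts (qk k) - qk k))) <= s * b * nrm (qk k).
  by apply: le_trans (HPc _) _; apply: Ha.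
apply: le_trans (lerD (le_trans H1 IH) H2) _.
have sb0 : 0 <= s * b by rewrite mulr_ge0.
have H3 := ler_wpM2l sb0 Hq.
apply: le_trans (lerD (lexx _) H3) _.
have H4 : Gs k.+1 = Gs k + dl ^+ k.
  rewrite /Gs exprS; field; by rewrite subr_eq0 eq_sym lt_eqF.
have H5 := Gs_le k.
have H6 : K * s * b * nrm x * Gs k <= K * s * b * nrm x / (1 - dl).
  apply: ler_wpM2l => //; by rewrite !mulr_ge0 // nrm_ge0.
rewrite H4 -natr1.
have H7 := ler_wpM2l sb0 H6.
set u := K * s * b * nrm x in H6 H7 *.
set v := (1 - dl)^-1.
rewrite -subr_ge0.
have -> : s * b * (K * nrm x * (Gs k + dl ^+ k) + (k%:R + 1) * u * v) - (s * b * (K * nrm x * Gs k + k%:R * u * v) + s * b * (K * dl ^+ k * nrm x + u * Gs k)) = s * b * (u * v) - s * b * (u * Gs k) by ring.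
by rewrite subr_ge0.
Qed.

Lemma traj_bound n : (0 < n)%N -> nrm (iter n A x - iter n B x) <=
  K * nrm x * (dl ^+ n + 2 * (s * b) / (1 - dl) + n%:R * (s * b) ^+ 2 / (1 - dl)).
Proof.
case: n => [//|n] _.
have -> : iter n.+1 B x = yk n.+1 by rewrite /yk iterS /B HPP.
have -> : iter n.+1 A x = qk n.+1 + Ps (xk n.+1) by rewrite /qk subrK.
rewrite -addrA; apply: le_trans (nrmD _ _) _.
have Hq := qk_bound n.+1 0; rewrite /= add0n expr0 mulr1 in Hq.
apply: le_trans (lerD Hq (pk_bound n.+1)) _.
have H5 := Gs_le n.+1.
have G0 := Gs_ge0 n.+1.
have nx0 := nrm_ge0 x.
have sb0 : 0 <= s * b by rewrite mulr_ge0.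
set G := Gs n.+1 in H5 G0 *. set v := (1 - dl)^-1 in H5 *.
have v0 : 0 < v by rewrite invr_gt0 subr_gt0.
set N := n.+1%:R. set e := dl ^+ n.+1. set nx := nrm x.
have Kx : 0 <= K * nx by rewrite mulr_ge0.
have H8 : K * nx * G <= K * nx * v by apply: ler_wpM2l.
have H9 := ler_wpM2l sb0 H8.
rewrite !mulrA in H9 *; nra.
Qed.
End Traj.
End Core.
Lemma geo0 (R : realType) (d C r : R) : 0 < d -> d < 1 -> 0 <= r ->
  (forall n, (0 < n)%N -> r <= C * d ^+ n) -> r = 0.
Proof.
move=> d0 d1 r0 H; apply/eqP; rewrite eq_le r0 andbT.
apply/ler_addgt0Pr => e e0; rewrite add0r.
have C1 : 0 < `|C| + 1 by rewrite ltr_wpDl.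
have hd1 : `|d| < 1 by rewrite ger0_norm // ltW.
have := @cvg_expr _ d hd1.
move/cvgrPdist_lt/(_ (e / (`|C| + 1)) (divr_gt0 e0 C1)) => [N _ HN].
have := HN N.+1 (leqnSn N); rewrite sub0r normrN ger0_norm ?exprn_ge0 ?(ltW d0) //= => hd.
apply: le_trans (H N.+1 isT) _.
have dn0 : 0 <= d ^+ N.+1 by rewrite exprn_ge0 // ltW.
apply: (@le_trans _ _ ((`|C| + 1) * d ^+ N.+1)).
  apply: ler_wpM2r => //; apply: le_trans (real_ler_norm _) _; [exact: num_real| by rewrite lerDl].
rewrite -ler_pdivlMl // mulrC; exact: ltW.
Qed.

Lemma final_ineq (R : realType) (K d dt t b cp c2 : R) (n : nat) :
  2 <= K -> 0 < d -> d < dt -> dt < 1 -> 0 <= t -> 0 <= b -> 1 <= cp -> (1 < n)%N ->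
  c2 = K / ((1 - d) * dt) ->
  K * (d ^+ n + 2 * (t / n%:R * b) / (1 - d) + n%:R * (t / n%:R * b) ^+ 2 / (1 - d))
  <= c2 * dt ^+ n + t * b / n%:R
     + n%:R^-1 * ((t * b * cp * c2 * (2 + t * b * cp * c2) * (dt - dt ^+ n)) / (1 - dt))
       * expR (2 * t * b * cp * c2).
Proof.
move=> K2 d0 ddt dt1 t0 b0 cp1 n1 hc2.
have dt0 : 0 < dt by apply: lt_trans ddt.
have omd : 0 < 1 - d by rewrite subr_gt0; apply: lt_trans dt1.
have omdt : 0 < 1 - dt by rewrite subr_gt0.
have K0 : 0 <= K by apply: le_trans K2.
have md : 0 < (1 - d) * dt by rewrite mulr_gt0.
have kc : c2 * dt = K / (1 - d) by rewrite hc2; field; rewrite ?gt_eqF //.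
have c2K : K <= c2.
  rewrite hc2 ler_pdivlMr // ler_piMr //.
  have : d * dt >= 0 by rewrite mulr_ge0 ?ltW.
  nra.
have c20 : 0 <= c2 by apply: le_trans c2K.
have P1 : K * d ^+ n <= c2 * dt ^+ n.
  apply: ler_pM => //; first by rewrite exprn_ge0 // ltW.
  by apply: lerXn2r; rewrite ?nnegrE ?(ltW d0) ?(ltW dt0) ?(ltW ddt).
have N0 : (0 : R) < n%:R by rewrite ltr0n; apply: ltn_trans n1.
set N := n%:R in N0 *.
set q := t / N * b.
have q0 : 0 <= q by rewrite /q mulr_ge0 // divr_ge0 // ltW.
have tbq : t * b = N * q by rewrite /q; field; rewrite gt_eqF.
rewrite tbq.
have P2 : 0 <= N * q / N by apply: divr_ge0; [apply: mulr_ge0 => //; exact: ltW | exact: ltW].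
have cp0 : 0 <= cp by apply: le_trans cp1.
have E1 : 1 <= expR (2 * t * b * cp * c2).
  apply: le_trans (expR_ge1Dx _); rewrite lerDl.
  by rewrite !mulr_ge0.
have G : dt <= (dt - dt ^+ n) / (1 - dt).
  rewrite ler_pdivlMr // mulrBr mulr1 lerB // -expr2.
  by apply: ler_wiXn2l; rewrite ?ltW.
set w := N * q * cp * c2.
have w0 : 0 <= w.
  rewrite /w; apply: mulr_ge0 => //; apply: mulr_ge0 => //; apply: mulr_ge0 => //; exact: ltW.
have P3 : N^-1 * (w * (2 + w) * dt) <= N^-1 * (w * (2 + w) * (dt - dt ^+ n) / (1 - dt)) * expR (2 * t * b * cp * c2).
  have h0 : 0 <= N^-1 * (w * (2 + w) * (dt - dt ^+ n) / (1 - dt)).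
    apply: mulr_ge0; first by rewrite invr_ge0 ltW.
    rewrite -mulrA; apply: mulr_ge0; first by rewrite mulr_ge0 // addr_ge0.
    apply: le_trans G; exact: ltW.
  apply: (@le_trans _ _ (N^-1 * (w * (2 + w) * (dt - dt ^+ n) / (1 - dt)))); last by rewrite ler_peMr.
  apply: ler_wpM2l; first by rewrite invr_ge0 ltW.
  rewrite -[X in _ <= X]mulrA; apply: ler_wpM2l => //; by rewrite mulr_ge0 // addr_ge0.
have P4 : K * (2 * q / (1 - d) + N * q ^+ 2 / (1 - d)) <= N^-1 * (w * (2 + w) * dt).
  have -> : N^-1 * (w * (2 + w) * dt) = q * cp * (c2 * dt) * (2 + N * q * cp * c2).
    by rewrite /w; field; rewrite gt_eqF.
  rewrite kc.
  set k := K / (1 - d).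
  have k0 : 0 <= k by rewrite divr_ge0 // ltW.
  have -> : K * (2 * q / (1 - d) + N * q ^+ 2 / (1 - d)) = k * (2 * q + N * q ^+ 2).
    by rewrite /k; field; rewrite gt_eqF.
  have c21 : 1 <= c2 by apply: le_trans c2K; apply: le_trans K2; rewrite ler1n.
  have h1 : q <= q * cp by rewrite ler_peMr.
  have h2 : q ^+ 2 <= q ^+ 2 * (cp * cp * c2).
    rewrite ler_peMr ?exprn_ge0 //.
    have h : 1 <= cp * cp by rewrite (le_trans cp1) // ler_peMr.
    have h' := h; apply: le_trans h' _; rewrite ler_peMr //; exact: le_trans ler01 h.
  have h3 := ler_wpM2l (ltW N0) h2.
  have -> : q * cp * k * (2 + N * q * cp * c2) = k * (2 * (q * cp) + N * (q ^+ 2 * (cp * cp * c2))).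
    by ring.
  apply: ler_wpM2l => //; apply: lerD => //; by rewrite ler_wpM2l.
have -> : K * (d ^+ n + 2 * q / (1 - d) + N * q ^+ 2 / (1 - d)) = K * d ^+ n + K * (2 * q / (1 - d) + N * q ^+ 2 / (1 - d)) by ring.
have P5 := le_trans P4 P3.
rewrite -/w; lra.
Qed.

Section Main.
Context (R : realType) (X : completeNormedModType R[i])
  (T : R -> {linear X -> X}) (D : set X) (L : X -> X)
  (M : {linear X -> X}) (J : nat) (P : 'I_J -> {linear X -> X})
  (lam : 'I_J -> R[i]) (delta ct b dt : R).
Context (hT : C0_contraction_semigroup T) (hG : is_generator T D L)
  (hMb : bounded_op M) (hM1 : opnorm M <= 1)
  (hPb : forall j, bounded_op (P j))
  (hPP : forall j k x, P j (P k x) = if j == k then P j x else 0)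
  (hlam : forall j, `|lam j| = 1)
  (d0 : 0 < delta) (d1 : delta < 1) (ct0 : 0 < ct)
  (hasym : forall n : nat, (0 < n)%N ->
     opnorm (fun x => iter n M x - \sum_(j < J) (lam j ^+ n) *: P j x)
       <= ct * delta ^+ n)
  (b0 : 0 <= b) (hD : closure D = setT)
  (hML : forall x, D x -> `|M (L x)| <= b%:C * `|x|)
  (hPj1 : forall j, opnorm (P j) = 1)
  (hPs1 : opnorm (fun x => \sum_(j < J) P j x) = 1).

Definition Ps (x : X) := \sum_(j < J) P j x.

Lemma scal_lin (F : {linear X -> X}) : scal F.
Proof. by move=> a x; rewrite linearZ. Qed.

Lemma nM y : nrm (M y) <= nrm y.
Proof.
apply: le_trans (opnorm_ge hMb (@scal_lin M) y) _.
by apply: ler_piMl => //; exact: nrm_ge0.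
Qed.

Lemma nP j y : nrm (P j y) <= nrm y.
Proof. by apply: le_trans (opnorm_ge (hPb j) (@scal_lin (P j)) y) _; rewrite hPj1 mul1r. Qed.

Lemma PsB x y : Ps (x - y) = Ps x - Ps y.
Proof. by rewrite /Ps -sumrB; apply: eq_bigr => j _; rewrite linearB. Qed.

Lemma PsZ : scal Ps.
Proof. by move=> a x; rewrite /Ps scaler_sumr; apply: eq_bigr => j _; rewrite linearZ. Qed.

Lemma Psb : bounded_op Ps.
Proof.
exists J%:R; apply/bounded_byE => y.
rewrite /Ps; apply: le_trans; first exact: nrm_sum.
apply: (@le_trans _ _ (\sum_(j < J) nrm y)); first by apply: ler_sum => j _; exact: nP.
by rewrite sumr_const card_ord mulr_natl.
Qed.

Lemma nPs y : nrm (Ps y) <= nrm y.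
Proof.
have h1 : opnorm Ps = 1 by exact: hPs1.
by apply: le_trans (opnorm_ge Psb PsZ y) _; rewrite h1 mul1r.
Qed.

Lemma sum_Pk (F : 'I_J -> R[i]) k y : \sum_(j < J) F j *: P j (P k y) = F k *: P k y.
Proof.
rewrite (bigD1 k) //= hPP eqxx big1 ?addr0 // => j /negPf jk.
by rewrite hPP jk scaler0.
Qed.

Lemma Pk_sum (F : 'I_J -> R[i]) k y : P k (\sum_(j < J) F j *: P j y) = F k *: P k y.
Proof.
rewrite linear_sum (bigD1 k) //= linearZ /= hPP eqxx big1 ?addr0 // => j /negPf jk.
by rewrite linearZ /= hPP eq_sym jk scaler0.
Qed.

Lemma PsPj k y : Ps (P k y) = P k y.
Proof. by have := sum_Pk (fun=> 1) k y; under eq_bigr do rewrite scale1r; rewrite scale1r. Qed.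

Lemma PjPs k y : P k (Ps y) = P k y.
Proof. by have := Pk_sum (fun=> 1) k y; under eq_bigr do rewrite scale1r; rewrite scale1r. Qed.

Lemma PsPs y : Ps (Ps y) = Ps y.
Proof. by rewrite {1}/Ps; apply: eq_bigr => j _; rewrite PjPs. Qed.

Lemma iterMD m x y : iter m M (x + y) = iter m M x + iter m M y.
Proof. by elim: m => //= m IH; rewrite IH linearD. Qed.
Lemma iterMZ m a x : iter m M (a *: x) = a *: iter m M x.
Proof. by elim: m => //= m IH; rewrite IH linearZ. Qed.
Lemma iterMN m x : iter m M (- x) = - iter m M x.
Proof. by rewrite -scaleN1r iterMZ scaleN1r. Qed.
Lemma iterMB m x y : iter m M (x - y) = iter m M x - iter m M y.
Proof. by rewrite iterMD iterMN. Qed.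
Lemma iterM_sum m (F : 'I_J -> X) : iter m M (\sum_(j < J) F j) = \sum_(j < J) iter m M (F j).
Proof.
elim: m => [|m IH] //=; by rewrite IH linear_sum.
Qed.
Lemma n_iterM m y : nrm (iter m M y) <= nrm y.
Proof. elim: m => //= m IH; exact: le_trans (nM _) IH. Qed.

Lemma nrm_lam n j (v : X) : nrm (lam j ^+ n *: v) = nrm v.
Proof. by rewrite nrmZ normrX hlam expr1n mul1r. Qed.

Lemma asymP n x : (0 < n)%N ->
  nrm (iter n M x - \sum_(j < J) (lam j ^+ n) *: P j x) <= ct * delta ^+ n * nrm x.
Proof.
move=> n0.
have bd : bounded_op (fun x => iter n M x - \sum_(j < J) (lam j ^+ n) *: P j x).
  exists (1 + J%:R); apply/bounded_byE => y.
  apply: le_trans (nrmB _ _) _; rewrite mulrDl mul1r; apply: lerD; first exact: n_iterM.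
  apply: le_trans; first exact: nrm_sum.
  apply: (@le_trans _ _ (\sum_(j < J) nrm y)); first by apply: ler_sum => j _; rewrite nrm_lam; exact: nP.
  by rewrite sumr_const card_ord mulr_natl.
have sc : scal (fun x => iter n M x - \sum_(j < J) (lam j ^+ n) *: P j x).
  move=> a y; rewrite iterMZ scalerBr scaler_sumr; congr (_ - _); apply: eq_bigr => j _.
  by rewrite linearZ /= !scalerA mulrC.
apply: le_trans (opnorm_ge bd sc x) _.
by apply: ler_wpM2r; [exact: nrm_ge0 | exact: hasym].
Qed.

Lemma eq_from_geo (u v : X) C : (forall n, (0 < n)%N -> nrm (u - v) <= C * delta ^+ n) -> u = v.
Proof.
move=> H; apply/eqP; rewrite -subr_eq0 -nrm_eq0; apply/eqP.
exact: (geo0 d0 d1 (nrm_ge0 _) H).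
Qed.

Lemma MPk k y : M (P k y) = lam k *: P k y.
Proof.
set z := P k y.
have Hz n : (0 < n)%N -> nrm (iter n M z - lam k ^+ n *: z) <= ct * delta ^+ n * nrm z.
  by move=> n0; have := asymP z n0; rewrite /z sum_Pk.
apply: (@eq_from_geo _ _ (2 * ct * nrm z)) => n n0.
have E : lam k ^+ n *: (M z - lam k *: z) =
   (iter n.+1 M z - lam k ^+ n.+1 *: z) - M (iter n M z - lam k ^+ n *: z).
  rewrite [M (_ - _)]linearB [M (_ *: _)]linearZ /= scalerBr scalerA -exprSr.
  by rewrite [RHS]addrC opprB addrA subrK.
rewrite -(nrm_lam n k) E.
apply: le_trans (nrmB _ _) _.
have h1 := Hz n.+1 isT.
have h2 : nrm (M (iter n M z - lam k ^+ n *: z)) <= ct * delta ^+ n * nrm z.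
  exact: le_trans (nM _) (Hz n n0).
apply: le_trans (lerD h1 h2) _.
have dn : delta ^+ n.+1 <= delta ^+ n by rewrite exprS ler_piMl ?exprn_ge0 ?ltW.
have : ct * delta ^+ n.+1 * nrm z <= ct * delta ^+ n * nrm z.
  apply: ler_wpM2r; first exact: nrm_ge0.
  by apply: ler_wpM2l => //; exact: ltW.
move=> h.
have -> : 2 * ct * nrm z * delta ^+ n = ct * delta ^+ n * nrm z + ct * delta ^+ n * nrm z by ring.
by apply: lerD.
Qed.

Lemma PkM k y : P k (M y) = lam k *: P k y.
Proof.
have Hf n x : (0 < n)%N -> nrm (P k (iter n M x) - lam k ^+ n *: P k x) <= ct * delta ^+ n * nrm x.
  move=> n0; rewrite -(Pk_sum (fun j => lam j ^+ n)) -linearB.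
  exact: le_trans (nP _ _) (asymP x n0).
apply: (@eq_from_geo _ _ (2 * ct * nrm y)) => n n0.
have E : lam k ^+ n *: (P k (M y) - lam k *: P k y) =
   (P k (iter n.+1 M y) - lam k ^+ n.+1 *: P k y) - (P k (iter n M (M y)) - lam k ^+ n *: P k (M y)).
  rewrite -iterSr scalerBr scalerA -exprSr.
  by rewrite [RHS]addrC opprB addrA subrK.
rewrite -(nrm_lam n k) E.
apply: le_trans (nrmB _ _) _.
have h1 := Hf n.+1 y isT.
have h2 : nrm (P k (iter n M (M y)) - lam k ^+ n *: P k (M y)) <= ct * delta ^+ n * nrm y.
  apply: le_trans (Hf n (M y) n0) _; apply: ler_wpM2l; last exact: nM.
  by rewrite mulr_ge0 ?exprn_ge0 // ltW.
apply: le_trans (lerD h1 h2) _.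
have dn : delta ^+ n.+1 <= delta ^+ n by rewrite exprS ler_piMl ?exprn_ge0 ?ltW.
have : ct * delta ^+ n.+1 * nrm y <= ct * delta ^+ n * nrm y.
  apply: ler_wpM2r; first exact: nrm_ge0.
  by apply: ler_wpM2l => //; exact: ltW.
move=> h.
have -> : 2 * ct * nrm y * delta ^+ n = ct * delta ^+ n * nrm y + ct * delta ^+ n * nrm y by ring.
by apply: lerD.
Qed.

Lemma PsM y : Ps (M y) = M (Ps y).
Proof.
rewrite /Ps linear_sum; apply: eq_bigr => j _; by rewrite PkM MPk.
Qed.

Lemma iterM_P m k y : iter m M (P k y) = lam k ^+ m *: P k y.
Proof.
elim: m => [|m IH] /=; first by rewrite expr0 scale1r.
by rewrite IH linearZ /= MPk scalerA -exprSr.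
Qed.

Lemma HK m z : nrm (iter m M (z - Ps z)) <= (ct + 2) * delta ^+ m * nrm z.
Proof.
case: m => [|m].
  rewrite /= expr0 mulr1; apply: le_trans (nrmB _ _) _.
  have := nPs z; have := nrm_ge0 z; have := mulr_ge0 (ltW ct0) (nrm_ge0 z); lra.
rewrite iterMB /Ps iterM_sum.
under eq_bigr do rewrite iterM_P.
apply: le_trans; first exact: asymP.
apply: ler_wpM2r; first exact: nrm_ge0.
by apply: ler_wpM2r; [rewrite exprn_ge0 // ltW | rewrite lerDl].
Qed.

Lemma hMLr x : D x -> nrm (M (L x)) <= b * nrm x.
Proof. by move=> Dx; have := hML Dx; rewrite !nrmE -rmorphM lecR. Qed.

Lemma Ha s y : 0 <= s -> nrm (M (T s y - y)) <= s * b * nrm y.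
Proof.
move=> s0.
apply: (@dense_ext _ _ (fun y => M (T s y - y)) _ 2 _ _ _ _ D hD) => //.
- move=> x z /=.
  have -> : T s (x - z) - (x - z) = (T s x - x) - (T s z - z).
    by rewrite linearB /= opprD addrACA -opprD.
  by rewrite linearB.
- move=> v; apply: le_trans (nM _) _; apply: le_trans (nrmB _ _) _.
  have := Tc hT v s0; lra.
- by rewrite mulr_ge0.
- move=> z Dz.
  have := key hT hG Dz s0 (G := M) (C := b * nrm z) nM.
  rewrite mulrA; apply=> r r0.
  have [DT LT] := TinD hT hG Dz r0.
  rewrite -LT; apply: le_trans (hMLr DT) _.
  by apply: ler_wpM2l => //; exact: Tc.
Qed.

Context (ddt : delta < dt) (dt1 : dt < 1).

Lemma main_bound :
  exists eps1 : R, 0 < eps1 /\ exists c2 : R, 0 <= c2 /\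
    forall (t : R) (n : nat), (0 < n)%N -> 0 <= t -> t <= n%:R * eps1 ->
      let cp := opnorm (fun x => x - \sum_(j < J) P j x) in
      opnorm (fun x => iter n (fun y => M (T (t / n%:R) y)) x
                       - iter n (fun y => \sum_(j < J) P j
                                   (M (T (t / n%:R) (\sum_(k < J) P k y)))) x)
      <= c2 * dt ^+ n + t * b / n%:R
         + n%:R^-1 * ((t * b * cp * c2 * (2 + t * b * cp * c2)
                       * (dt - dt ^+ n)) / (1 - dt))
           * expR (2 * t * b * cp * c2).
Proof.
have dt0 : 0 < dt by apply: lt_trans ddt.
have omd : 0 < 1 - delta by rewrite subr_gt0.
have omdt : 0 < 1 - dt by rewrite subr_gt0.
have md : 0 < (1 - delta) * dt by rewrite mulr_gt0.
have K2 : 2 <= ct + 2 by rewrite lerDr ltW.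
have K0 : 0 <= ct + 2 by apply: le_trans K2.
exists 1; split => //.
set c2 := (ct + 2) / ((1 - delta) * dt).
have c20 : 0 <= c2 by rewrite divr_ge0 // ltW.
exists c2; split => //.
move=> t n n0 t0 _; rewrite [is_true _]/=.
set cp := opnorm (fun x => x - \sum_(j < J) P j x).
have N0 : (0 : R) < n%:R by rewrite ltr0n.
set s := t / n%:R.
have s0 : 0 <= s by rewrite divr_ge0 // ltW.
have Qb : bounded_op (fun x => x - Ps x).
  exists 2; apply/bounded_byE => y; apply: le_trans (nrmB _ _) _.
  have := nPs y; lra.
have Qsc : scal (fun x => x - Ps x) by move=> a y; rewrite scalerBr PsZ.
have cpE : opnorm (fun x => x - Ps x) = cp by [].
have cp0 : 0 <= cp by rewrite -cpE; exact: opnorm_ge0.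
have dn : dt ^+ n <= dt.
  by have := @ler_wiXn2l _ dt (ltW dt0) (ltW dt1) n 1 n0; rewrite expr1.
have rhs0 : 0 <= n%:R^-1 * ((t * b * cp * c2 * (2 + t * b * cp * c2)
                       * (dt - dt ^+ n)) / (1 - dt)) * expR (2 * t * b * cp * c2).
  apply: mulr_ge0; last exact: expR_ge0.
  apply: mulr_ge0; first by rewrite invr_ge0 ltW.
  apply: divr_ge0; last exact: ltW.
  apply: mulr_ge0; last by rewrite subr_ge0.
  have w0 : 0 <= t * b * cp * c2 by apply: mulr_ge0 => //; apply: mulr_ge0 => //; apply: mulr_ge0.
  by rewrite mulr_ge0 // addr_ge0.
have tb0 : 0 <= t * b / n%:R by rewrite divr_ge0 ?mulr_ge0 // ltW.
have c2dt : 0 <= c2 * dt ^+ n by rewrite mulr_ge0 // exprn_ge0 // ltW.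
have [cp1|cp1] := leP 1 cp; last first.
  have Q0 y : y - Ps y = 0.
    have h := opnorm_ge Qb Qsc (y - Ps y).
    have E : y - Ps y - Ps (y - Ps y) = y - Ps y by rewrite PsB PsPs subrr subr0.
    rewrite E in h.
    rewrite cpE in h.
    have := nrm_ge0 (y - Ps y); move: h; set u := nrm (y - Ps y) => h u0.
    have : u <= 0 by nra.
    move=> u_le; apply/eqP; by rewrite -nrm_eq0 -/u eq_le u_le u0.
  have PsI z : Ps z = z by apply/esym/eqP; rewrite -subr_eq0 Q0.
  have EB : (fun y => \sum_(j < J) P j (M (T (t / n%:R) (\sum_(k < J) P k y))))
       =1 (fun y => M (T (t / n%:R) y)).
    by move=> y /=; rewrite -[\sum_(k < J) P k y]/(Ps y) PsI -[LHS]/(Ps _) PsI.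
  apply: (@le_trans _ _ 0); last by rewrite !addr_ge0.
  apply: opnorm_le => // x.
  by rewrite (eq_iter EB) subrr nrm0 mul0r.
have hB y : nrm (\sum_(j < J) P j (M (T (t / n%:R) (\sum_(k < J) P k y)))) <= nrm y.
  apply: le_trans (nPs _) _; apply: le_trans (nM _) _; apply: le_trans (Tc hT _ s0) _.
  exact: nPs.
have hA y : nrm (M (T (t / n%:R) y)) <= nrm y.
  by apply: le_trans (nM _) _; apply: Tc.
have [n1|n2] := leqP n 1.
  have n1' : n = 1%N by apply/eqP; rewrite eqn_leq n1 n0.
  apply: (@le_trans _ _ 2).
    apply: opnorm_le => // x; apply: le_trans (nrmB _ _) _.
    have := iter_contr n x hA; have := iter_contr n x hB; lra.
  have : 2 <= c2 * dt ^+ n.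
    have -> : c2 * dt ^+ n = (ct + 2) / (1 - delta).
      by rewrite n1' expr1 /c2; field; rewrite ?gt_eqF.
    rewrite ler_pdivlMr // (le_trans _ K2) // ler_piMr //.
    by rewrite lerBlDr lerDl ltW.
  lra.
have TB := traj_bound PsB nM (fun y => Tc hT y s0) nPs PsPs PsM (fun y => Ha y s0) HK s0 b0 K0 d0 d1.
apply: (@le_trans _ _ ((ct + 2) * (delta ^+ n + 2 * (s * b) / (1 - delta)
          + n%:R * (s * b) ^+ 2 / (1 - delta)))).
  apply: opnorm_le.
    move=> x; rewrite mulrAC; exact: TB x n n0.
  have sb0 : 0 <= s * b by rewrite mulr_ge0.
  apply: mulr_ge0 => //; rewrite !addr_ge0 //.
  - by rewrite exprn_ge0 // ltW.
  - by apply: divr_ge0; [rewrite mulr_ge0 | exact: ltW].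
  - apply: divr_ge0; last exact: ltW.
    by rewrite mulr_ge0 ?exprn_ge0 // ltW.
exact: (final_ineq K2 d0 ddt dt1 t0 b0 cp1 n2 erefl).
Qed.
End Main.

Unset Implicit Arguments.
Set Strict Implicit.
Theorem lemma6p3 (R : realType) (X : completeNormedModType R[i])
  (T : R -> {linear X -> X}) (D : set X) (L : X -> X)
  (M : {linear X -> X}) (J : nat) (P : 'I_J -> {linear X -> X})
  (lam : 'I_J -> R[i]) (delta ct b dt : R) :
  C0_contraction_semigroup T ->
  is_generator T D L ->
  bounded_op M -> opnorm M <= 1 ->
  (forall j, bounded_op (P j)) ->
  (forall j k x, P j (P k x) = if j == k then P j x else 0) ->
  (forall j, `|lam j| = 1) ->
  0 < delta -> delta < 1 -> 0 < ct ->
  (forall n : nat, (0 < n)%N ->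
     opnorm (fun x => iter n M x - \sum_(j < J) (lam j ^+ n) *: P j x)
       <= ct * delta ^+ n) ->
  0 <= b ->
  (* M L densely defined (on D(L)) and bounded by b *)
  closure D = setT ->
  (forall x, D x -> `|M (L x)| <= b%:C * `|x|) ->
  (* L P_Sigma densely defined (on {x | P_Sigma x in D(L)}) and bounded by b *)
  closure [set x | D (\sum_(j < J) P j x)] = setT ->
  (forall x, D (\sum_(j < J) P j x) ->
     `|L (\sum_(j < J) P j x)| <= b%:C * `|x|) ->
  (forall j, opnorm (P j) = 1) ->
  opnorm (fun x => \sum_(j < J) P j x) = 1 ->
  delta < dt -> dt < 1 ->
  exists eps1 : R, 0 < eps1 /\ exists c2 : R, 0 <= c2 /\
    forall (t : R) (n : nat), (0 < n)%N -> 0 <= t -> t <= n%:R * eps1 ->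
      let cp := opnorm (fun x => x - \sum_(j < J) P j x) in
      opnorm (fun x => iter n (fun y => M (T (t / n%:R) y)) x
                       - iter n (fun y => \sum_(j < J) P j
                                   (M (T (t / n%:R) (\sum_(k < J) P k y)))) x)
      <= c2 * dt ^+ n + t * b / n%:R
         + n%:R^-1 * ((t * b * cp * c2 * (2 + t * b * cp * c2)
                       * (dt - dt ^+ n)) / (1 - dt))
           * expR (2 * t * b * cp * c2).
Proof.
move=> hT hG hMb hM1 hPb hPP hlam d0 d1 ct0 hasym b0 hD hML _ _ hPj1 hPs1 ddt dt1.
exact: (main_bound hT hG hMb hM1 hPb hPP hlam d0 d1 ct0 hasym b0 hD hML hPj1 hPs1 ddt dt1).
Qed.
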